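(* Let $\alpha>1$, $1\le m\le d$, $\mathcal{A}=\{a\in\{0,1\}^d:\|a\|_1=m\}$, let $r_1\in\mathbb{R}^d$ have i.i.d. coordinates from $\mathcal{D}_\alpha\in\{\mathcal{P}_\alpha,\mathcal{F}_\alpha\}$, and let $a_1\in\arg\min_{a\in\mathcal{A}}a^\top(-r_1)$. Then $$\mathbb{E}_{r_1\sim\mathcal{D}_\alpha}[a_1^\top r_1]\le\begin{cases}\left(\frac{\alpha}{\alpha-1}m^{1-\frac1\alpha}+\Gamma\left(1-\frac1\alpha\right)\right)(d+1)^{\frac1\alpha}, & \mathcal{D}_\alpha=\mathcal{P}_\alpha,\\[4pt] \left(\frac{\alpha}{\alpha-1}m^{1-\frac1\alpha}+\Gamma\left(1-\frac1\alpha\right)\right)(d+1)^{\frac1\alpha}+m, & \mathcal{D}_\alpha=\mathcal{F}_\alpha.\end{cases}$$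
   Context: Fréchet $\mathcal{F}_\alpha$: CDF $F(x)=e^{-1/x^\alpha}$, $x\ge0$; Pareto $\mathcal{P}_\alpha$: CDF $F(x)=1-x^{-\alpha}$, $x\ge1$. $\Gamma$ is the gamma function. ($a_1^\top r_1$ is the sum of the $m$ largest coordinates of $r_1$.) *)

(* Defs.v *)
From HB Require Import structures.
From mathcomp Require Import all_boot all_order all_algebra.
From mathcomp Require Import all_classical all_reals all_analysis.
Set Implicit Arguments. Unset Strict Implicit. Unset Printing Implicit Defensive.
Import Order.TTheory GRing.Theory Num.Theory.
Import numFieldNormedType.Exports.
Local Open Scope classical_set_scope.
Local Open Scope ring_scope.

Definition Gamma (R : realType) (s : R) : R :=
  fine (\int[@lebesgue_measure R]_(t in `]0%R, +oo[) ((t `^ (s - 1)) * expR (- t))%:E).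

Inductive heavy_dist := Pareto | Frechet.

Definition heavy_cdf (R : realType) (D : heavy_dist) (alpha x : R) : R :=
  match D with
  | Pareto => if 1 <= x then 1 - x `^ (- alpha) else 0
  | Frechet => if 0 < x then expR (- x `^ (- alpha)) else 0
  end.

Definition mutually_independent (d0 : measure_display) (T : measurableType d0)
  (R : realType) (P : probability T R) (n : nat) (X : 'I_n -> T -> R) : Prop :=
  forall B : 'I_n -> set R, (forall i, measurable (B i)) ->
    P (\bigcap_(i in [set: 'I_n]) (X i @^-1` B i)) =
    (\prod_(i < n) P (X i @^-1` B i))%E.

(* a^T r for the indicator vector a of a set A of coordinates. *)
Definition inner_ind (R : realType) (n : nat) (A : {set 'I_n}) (r : 'I_n -> R) : R :=
  \sum_(i in A) r i.

(* Action set: indicator vectors with ||a||_1 = m, encoded as sets of size m. *)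
Definition in_action_set (n m : nat) (A : {set 'I_n}) : bool := #|A| == m.

(* Main.v *)
Require Import Defs.
From HB Require Import structures.
From mathcomp Require Import all_boot all_order all_algebra.
From mathcomp Require Import all_classical all_reals all_analysis.
From mathcomp Require Import measurable_realfun.
From mathcomp Require Import ring lra.
Import Order.TTheory GRing.Theory Num.Theory.
Import numFieldNormedType.Exports.
Local Open Scope classical_set_scope.
Local Open Scope ring_scope.
Section S.
Variable R : realType.
Lemma shift_pow_derive (c p x : R) : 0 < x + c ->
  is_derive x 1 (fun y => (y + c) `^ p) (p * (x + c) `^ (p - 1)).
Proof.
move=> cx.
have [h1 h1'] := @is_derive_shift R x 1 c.
have [h2 h2'] := is_derive1_powR p cx.
have hc : derivable ((@powR R ^~ p) \o shift c) x 1.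
  apply/derivable1_diffP; apply: differentiable_comp; exact/derivable1_diffP.
split => //.
have := (@derive1_comp R _ _ _ h1 h2).
rewrite !derive1E h2' h1' /= mulr1 => <-.
by [].
Qed.
Lemma pow_cvg0 (c p : R) : p < 0 -> (x + c) `^ p @[x --> +oo] --> 0.
Proof.
move=> p0; apply/cvgr0Pnorm_lt => e e0.
pose M := e `^ (p^-1).
have M0 : 0 < M by rewrite powR_gt0.
near=> x.
have xc : M < x + c by rewrite -ltrBlDr; near: x; apply: nbhs_pinfty_gt; rewrite num_real.
have xc0 : 0 < x + c by rewrite (lt_trans M0).
rewrite ger0_norm ?powR_ge0 //.
have -> : e = M `^ p by rewrite /M -powRrM mulVf ?lt_eqF // powRr1 ?ltW.
have q0 : 0 < - p by rewrite oppr_gt0.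
have E z : z `^ p = (z `^ (- p))^-1 by rewrite -powRN opprK.
rewrite !E ltf_pV2 ?posrE ?powR_gt0 //.
by apply: gt0_ltr_powR => //; rewrite ?nnegrE ltW.
Unshelve. all: by end_near. Qed.
Lemma tail_int (c a : R) : 0 < c -> 1 < a ->
  (\int[@lebesgue_measure R]_(x in `[0%R, +oo[) ((x + c) `^ (- a))%:E
    = (c `^ (1 - a) / (a - 1))%:E)%E.
Proof.
move=> c0 a1.
pose k := (1 - a)^-1.
have k0 : 1 - a != 0 by rewrite subr_eq0 lt_eqF.
pose F := fun x : R => k * (x + c) `^ (1 - a).
have dF x : 0 < x + c -> is_derive x 1 F ((x + c) `^ (- a)).
  move=> xc; have H := is_deriveZ k (shift_pow_derive c (1 - a) x xc).
  have -> : F = k *: (fun y => (y + c) `^ (1 - a)) by apply/funext.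
  apply: (is_derive_eq H).

  by rewrite /k /= [_ *: _]mulrA mulVf // mul1r addrAC subrr add0r.
have contf : forall x, 0 <= x -> {for x, continuous (fun y : R => (y + c) `^ (- a))}.
  move=> x x0; apply: differentiable_continuous; apply/derivable1_diffP.
  by have [] := shift_pow_derive c (- a) x (ltr_wpDl x0 c0).
rewrite (@ge0_continuous_FTC2y R _ F 0 0).
- by rewrite /F -EFinN /k mulrC -mulrN -invrN opprB (add0r c) add0e.
- by move=> x _; rewrite powR_ge0.
- apply: continuous_in_subspaceT => x; rewrite inE /= in_itv /= andbT.
  exact: contf.
- have H : (x + c) `^ (1 - a) @[x --> +oo] --> 0.
    by apply: pow_cvg0; rewrite subr_lt0.
  by move/(cvgMl_tmp (a:=k)): H; rewrite mulr0.
- by move=> x x0; have [] := dF x (ltr_wpDl (ltW x0) c0).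
- apply: cvg_at_right_filter; apply: differentiable_continuous; apply/derivable1_diffP.
  by have [] := dF 0 (ltr_wpDl (lexx 0) c0).
- move=> x; rewrite in_itv /= andbT => x0.
  by have [_ <-] := dF x (ltr_wpDl (ltW x0) c0); rewrite derive1E.
Qed.
Lemma cdf_tail (D : heavy_dist) (a y : R) : 1 < a -> 1 <= y ->
  1 - heavy_cdf D a y <= y `^ (- a).
Proof.
move=> a1 y1; case: D => /=.
  by rewrite y1 opprB addrCA subrr addr0.
rewrite (lt_le_trans ltr01 y1) lerBlDr -lerBlDl.
exact: expR_ge1Dx.
Qed.

Lemma tail_exp (d0 : measure_display) (T : measurableType d0) (P : probability T R)
  (D : heavy_dist) (a c : R) (X : T -> R) :
  1 < a -> 1 <= c -> measurable_fun setT X ->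
  (forall x, P [set w | X w <= x] = (heavy_cdf D a x)%:E) ->
  (\int[P]_w ((Num.max (X w - c) 0)%:E) <= (c `^ (1 - a) / (a - 1))%:E)%E.
Proof.
move=> a1 c1 mX hX.
have mY : (fun w => Num.max (X w - c) 0) \in mfun.
  rewrite inE; apply: measurable_maxr; last exact: measurable_cst.
  by apply: measurable_funB => //; exact: measurable_cst.
pose Y : {RV P >-> R} := mfun_Sub mY.
have Y0 w : 0 <= Y w by rewrite /Y mfun_valP le_max lexx orbT.
have := ge0_expectation_ccdf Y0.
rewrite expectation_def /Y mfun_valP => ->.
rewrite -(tail_int c a (lt_le_trans ltr01 c1) a1).
apply: ge0_le_integral => //.
- exact: measurable_funTS (ccdf_measurable _).
- apply/measurable_EFinP; apply: measurable_funTS.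
  have h1 : measurable_fun [set: R] (fun x : R => x + c).
    by apply: measurable_funD => //.
  exact: (measurableT_comp (@measurable_powR R (- a)) h1).
move=> r; rewrite /= in_itv /= andbT => r0.
rewrite /ccdf /distribution /pushforward.
have -> : Y @^-1` `]r, +oo[ = ~` [set w | X w <= r + c].
  apply/seteqP; split => w; rewrite /= in_itv /= andbT lt_max (ltNge r 0) r0 orbF ltrBrDr.
    by move=> h /(lt_le_trans h); rewrite ltxx.
  by move/negP; rewrite -ltNge.
rewrite probability_setC; last first.
  rewrite (_ : [set w | X w <= r + c] = X @^-1` `]-oo, r + c]); last first.
    by apply/seteqP; split => w; rewrite /= in_itv.
  by rewrite -[X @^-1` _]setTI; apply: mX => //.
rewrite hX lee_fin; apply: cdf_tail => //.
by rewrite -[1]add0r lerD.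
Qed.
Lemma meas_bigmax (d0 : measure_display) (T : measurableType d0)
  (I : Type) (s : seq I) (Pr : pred I) (F : I -> T -> R) :
  (forall i, measurable_fun setT (F i)) ->
  measurable_fun setT (fun w => \big[Num.max/0]_(i <- s | Pr i) F i w).
Proof.
move=> mF; elim: s => [|x s IH].
  under eq_fun do rewrite big_nil.
  exact: measurable_cst.
under eq_fun do rewrite big_cons.
by case: (Pr x) => //; apply: measurable_maxr.
Qed.

Lemma meas_bigsum (d0 : measure_display) (T : measurableType d0)
  (I : Type) (s : seq I) (Pr : pred I) (F : I -> T -> R) :
  (forall i, measurable_fun setT (F i)) ->
  measurable_fun setT (fun w => \sum_(i <- s | Pr i) F i w).
Proof.
move=> mF; elim: s => [|x s IH].
  under eq_fun do rewrite big_nil.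
  exact: measurable_cst.
under eq_fun do rewrite big_cons.
by case: (Pr x) => //; apply: measurable_funD.
Qed.
Lemma final_ineq (alpha : R) (d m : nat) : 1 < alpha -> (1 <= m)%N -> (m <= d)%N ->
  let c := ((d.+1)%:R / m%:R) `^ alpha^-1 in
  1 <= c /\ m%:R * c + d%:R * (c `^ (1 - alpha) / (alpha - 1))
     <= alpha / (alpha - 1) * m%:R `^ (1 - alpha^-1) * (d.+1)%:R `^ alpha^-1.
Proof.
move=> a1 m1 md c.
have a0 : 0 < alpha by apply: lt_trans a1.
have m0 : 0 < m%:R :> R by rewrite ltr0n.
have d0 : 0 < d.+1%:R :> R by rewrite ltr0n.
pose b := d.+1%:R / m%:R : R.
have b1 : 1 <= b by rewrite /b ler_pdivlMr // mul1r ler_nat; apply: leqW.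
have b0 : 0 < b by apply: lt_le_trans b1.
have c1 : 1 <= c.
  have ha : 0 < alpha^-1 by rewrite invr_gt0.
  have := @ge0_ler_powR R alpha^-1 (ltW ha) 1 b.
  by rewrite !nnegrE ler01 (ltW b0) powR1 => /(_ isT isT b1).
have c0 : 0 < c by apply: lt_le_trans c1.
split => //.
have E1 : c `^ (1 - alpha) = c * (m%:R / d.+1%:R).
  rewrite powRD; last by rewrite (gt_eqF c0) implybT.
  rewrite powRr1 ?ltW //; congr (_ * _).
  rewrite /c -powRrM mulrN mulVf ?gt_eqF // powRN powRr1 ?ltW //.
  by rewrite /b invf_div.
have E2 : m%:R `^ (1 - alpha^-1) * d.+1%:R `^ alpha^-1 = m%:R * c.
  rewrite /c /b powRM ?ltW ?invr_gt0 //.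
  have -> : m%:R^-1 `^ alpha^-1 = (m%:R `^ alpha^-1)^-1 :> R.
    by rewrite -(powRr1 (ltW m0)) -powRN -powRrM powRr1 ?ltW // mulN1r powRN.
  rewrite powRB; last by rewrite (gt_eqF m0) implybT.
  rewrite powRr1 ?ltW //.
  by rewrite mulrCA mulrC.
rewrite -mulrA E2 E1.
have hd : d%:R * (c * (m%:R / d.+1%:R)) <= m%:R * c.
  rewrite (_ : d%:R * (c * (m%:R / d.+1%:R)) = (d%:R / d.+1%:R) * (m%:R * c)); last first.
    by field; rewrite gt_eqF.
  apply: ler_piMl; first by rewrite mulr_ge0 ?ltW.
  by rewrite ler_pdivrMr // mul1r ler_nat.
have -> : alpha / (alpha - 1) * (m%:R * c) = m%:R * c + m%:R * c / (alpha - 1).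
  by field; rewrite subr_eq0 gt_eqF.
rewrite lerD2l mulrA ler_wpM2r // ltW // invr_gt0 subr_gt0 //.
Qed.
Lemma bigmax_ge0 (I : Type) (s : seq I) (Pr : pred I) (F : I -> R) :
  0 <= \big[Num.max/0]_(i <- s | Pr i) F i.
Proof.
elim: s => [|x s IH]; first by rewrite big_nil.
by rewrite big_cons; case: (Pr x) => //; rewrite le_max IH orbT.
Qed.
End S.

Theorem lemma9 (R : realType) (D : heavy_dist) (alpha : R) (d m : nat)
  (d0 : measure_display) (T : measurableType d0) (P : probability T R)
  (r1 : 'I_d -> T -> R) (a1 : T -> {set 'I_d}) :
  1 < alpha -> (1 <= m)%N -> (m <= d)%N ->
  (forall i, measurable_fun setT (r1 i)) ->
  mutually_independent P r1 ->
  (forall i (x : R), P [set w | r1 i w <= x] = (heavy_cdf D alpha x)%:E) ->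
  (forall w, in_action_set m (a1 w)) ->
  (forall w, forall a, in_action_set m a ->
     inner_ind (a1 w) (fun i => - r1 i w) <= inner_ind a (fun i => - r1 i w)) ->
  (\int[P]_w (inner_ind (a1 w) (fun i => r1 i w))%:E <=
   ((alpha / (alpha - 1) * m%:R `^ (1 - alpha^-1) + Gamma (1 - alpha^-1))
      * (d.+1)%:R `^ (alpha^-1)
    + (if D is Frechet then m%:R else 0))%:E)%E.
Proof.
move=> a1' m1 md mr _ hcdf ha hopt.
move: (@final_ineq R alpha d m a1' m1 md) => /= [c1 hfin].
set c := ((d.+1)%:R / m%:R) `^ alpha^-1 in c1 hfin.
pose f w := inner_ind (a1 w) (fun i => r1 i w).
pose g w := m%:R * c + \sum_(i < d) Num.max (r1 i w - c) 0.
pose M w := \big[Num.max/0]_(A <- index_enum {set 'I_d} | #|A| == m)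
              \sum_(i <- index_enum 'I_d | i \in A) r1 i w.
have hM w : Num.max (f w) 0 = M w.
  apply/eqP; rewrite eq_le; apply/andP; split.
    rewrite ge_max; apply/andP; split; last exact: bigmax_ge0.
    apply: (le_bigmax_seq 0 (a1 w)); first exact: mem_index_enum.
    exact: ha.
  apply: bigmax_le => [|A hA]; first by rewrite le_max lexx orbT.
  rewrite le_max; apply/orP; left.
  have := hopt w A hA; rewrite /inner_ind !sumrN lerN2.
  done.
have mM : measurable_fun setT M.
  apply: meas_bigmax => A; exact: meas_bigsum.
have fg w : f w <= g w.
  rewrite /f /g /inner_ind.
  have ht i : r1 i w <= c + Num.max (r1 i w - c) 0.
    by rewrite -lerBlDl le_max lexx.
  apply: le_trans (ler_sum _ (fun i _ => ht i)) _.
  rewrite big_split /= sumr_const.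
  have := ha w; rewrite /in_action_set => /eqP ->.
  rewrite mulr_natl lerD2l.
  rewrite [X in _ <= X](bigID (fun i => i \in a1 w)) /= lerDl.
  by apply: sumr_ge0 => i _; rewrite le_max lexx orbT.
have g0 w : 0 <= g w.
  rewrite /g; apply: addr_ge0; first by rewrite mulr_ge0 ?ler0n ?(le_trans ler01).
  by apply: sumr_ge0 => i _; rewrite le_max lexx orbT.
have mg : measurable_fun setT g.
  apply: measurable_funD; first exact: measurable_cst.
  apply: meas_bigsum => i; apply: measurable_maxr; last exact: measurable_cst.
  by apply: measurable_funB => //; exact: measurable_cst.
rewrite integralE.
have hneg : (0 <= \int[P]_w ((fun w => (f w)%:E)^\- w))%E.
  by apply: integral_ge0 => w _; exact: funeneg_ge0.
apply: le_trans (leeB (lexx _) hneg) _; rewrite sube0.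
apply: (@le_trans _ _ (\int[P]_w (g w)%:E)%E).
  apply: ge0_le_integral => //.
  - rewrite (_ : (fun w => (f w)%:E)^\+%E = EFin \o M).
      exact/measurable_EFinP.
    by apply/funext => w; rewrite funeposE /= -hM EFin_max.
  - exact/measurable_EFinP.
  - move=> w _; rewrite funeposE /= ge_max !lee_fin fg g0 //.
have Eg w : (g w)%:E = ((m%:R * c)%:E + \sum_(i < d) (Num.max (r1 i w - c) 0)%:E)%E.
  by rewrite /g EFinD sumEFin.
under eq_integral => w _ do rewrite Eg.
have mmax i : measurable_fun setT (fun w => Num.max (r1 i w - c) 0).
  apply: measurable_maxr; last exact: measurable_cst.
  by apply: measurable_funB => //; exact: measurable_cst.
have mS : measurable_fun setT (fun w => \sum_(i < d) (Num.max (r1 i w - c) 0)%:E)%E.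
  under eq_fun do rewrite sumEFin.
  by apply/measurable_EFinP; apply: meas_bigsum.
have S0 : forall w, setT w -> (0 <= \sum_(i < d) (Num.max (r1 i w - c) 0)%:E)%E.
  by move=> w _; apply: sume_ge0 => i _; rewrite lee_fin le_max lexx orbT.
have C0 : forall w : T, setT w -> (0 <= (cst (m%:R * c)%:E) w)%E.
  by move=> w _; rewrite lee_fin mulr_ge0 ?ler0n ?(le_trans ler01).
rewrite (ge0_integralD P measurableT C0 (measurable_cst _) S0 mS).
rewrite integral_cst // [X in (_ * X)%E](_ : _ = 1%E) ?mule1; last exact: probability_setT.
rewrite ge0_integral_sum //; last 2 first.
- move=> i; apply/measurable_EFinP; apply: measurable_maxr; last exact: measurable_cst.
  by apply: measurable_funB => //; exact: measurable_cst.
- by move=> i w _; rewrite lee_fin le_max lexx orbT.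
apply: (@le_trans _ _ ((m%:R * c)%:E + \sum_(i < d) (c `^ (1 - alpha) / (alpha - 1))%:E)%E).
  apply: leeD2l; apply: lee_sum => i _.
  exact: tail_exp.
rewrite sumEFin -EFinD lee_fin sumr_const card_ord -(mulr_natl _ d).
apply: le_trans hfin _.
have G0 : 0 <= Gamma (1 - alpha^-1).
  rewrite /Gamma; apply: fine_ge0; apply: integral_ge0 => t _.
  by rewrite lee_fin mulr_ge0 ?powR_ge0 ?expR_ge0.
rewrite mulrDl -addrA lerDl; apply: addr_ge0.
  by rewrite mulr_ge0 ?powR_ge0.
by case: D {hcdf}.
Qed.
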